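(* Consider simultaneous double $Q$-learning (SDQ) on a finite MDP as described in the context, with constant step-size $\alpha\in(0,1)$, discount factor $\gamma\in(0,1)$, rewards bounded by $1$ in absolute value, i.i.d. sampling of state-action pairs from a distribution $d$ with $d(s,a)>0$ for all $(s,a)$, and initial estimators satisfying $\|Q_0^A\|_\infty\le 1$, $\|Q_0^B\|_\infty\le 1$. Let $d_{\min}=\min_{(s,a)}d(s,a)$ and $\rho=1-\alpha d_{\min}(1-\gamma)$. Then for every $k\ge 0$, \[ \mathbb{E}\big[\|Q_k^A-Q^*\|_\infty\big]\le \frac{120\,\alpha^{1/2}|\mathcal{S}\times\mathcal{A}|}{d_{\min}^{9/2}(1-\gamma)^{11/2}}+\frac{48\,|\mathcal{S}\times\mathcal{A}|^{3/2}}{1-\gamma}\cdot\frac{\rho^{-4}(-8)^4}{(\ln\rho)^4}\,\rho^{-4/\ln\rho}\,\rho^{k/2}, \] and the same bound holds for $\mathbb{E}[\|Q_k^B-Q^*\|_\infty]$.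
   Context: Finite MDP: state space $\mathcal{S}=\{1,\dots,|\mathcal{S}|\}$, action space $\mathcal{A}=\{1,\dots,|\mathcal{A}|\}$, transition probabilities $P(s'|s,a)$, deterministic reward $r(s,a,s')$ with $\max|r(s,a,s')|\le 1$, discount $\gamma\in(0,1)$; the MDP is assumed ergodic. $Q^*$ is the optimal action-value function. A behavior policy $\beta$ and a stationary state distribution $p$ give $d(s,a)=p(s)\beta(a|s)$, assumed $>0$ for all $(s,a)$. At each iteration $k=0,1,\dots$, $(s_k,a_k)$ is drawn independently from $d$, $s_{k+1}$ is drawn from $P(\cdot|s_k,a_k)$, and $r_{k+1}=r(s_k,a_k,s_{k+1})$. SDQ maintains two tables $Q_k^A,Q_k^B:\mathcal{S}\times\mathcal{A}\to\mathbb{R}$ and updates only the entry $(s_k,a_k)$ of each (other entries unchanged): $Q_{k+1}^A(s_k,a_k)=Q_k^A(s_k,a_k)+\alpha\{r_{k+1}+\gamma Q_k^A(s_{k+1},\arg\max_{a}Q_k^B(s_{k+1},a))-Q_k^A(s_k,a_k)\}$, $Q_{k+1}^B(s_k,a_k)=Q_k^B(s_k,a_k)+\alpha\{r_{k+1}+\gamma Q_k^B(s_{k+1},\arg\max_{a}Q_k^A(s_{k+1},a))-Q_k^B(s_k,a_k)\}$, with constant step-size $\alpha\in(0,1)$. $|\mathcal{S}\times\mathcal{A}|=|\mathcal{S}||\mathcal{A}|$. *)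

(* Defs.v *)
From HB Require Import structures.
From mathcomp Require Import all_boot all_order all_algebra.
From mathcomp Require Import all_classical all_reals all_analysis.
Set Implicit Arguments. Unset Strict Implicit. Unset Printing Implicit Defensive.
Import Order.TTheory GRing.Theory Num.Theory.
Local Open Scope ring_scope.

Section SDQ.
Variables (R : realType) (S A : finType).

Definition supnorm (Q : S -> A -> R) : R :=
  \big[Num.max/0]_(sa : S * A) `|Q sa.1 sa.2|.

Definition is_distr (p : S -> R) := (forall s, 0 <= p s) /\ \sum_s p s = 1.
Definition is_policy (beta : S -> A -> R) :=
  forall s, (forall a, 0 <= beta s a) /\ \sum_a beta s a = 1.
Definition is_kernel (P : S -> A -> S -> R) :=
  forall s a, (forall s', 0 <= P s a s') /\ \sum_s' P s a s' = 1.

Definition Pbeta (P : S -> A -> S -> R) (beta : S -> A -> R) (s s' : S) : R :=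
  \sum_a beta s a * P s a s'.

Fixpoint Pbeta_n (P : S -> A -> S -> R) (beta : S -> A -> R) (n : nat) (s s' : S) : R :=
  match n with
  | 0 => (s == s')%:R
  | n'.+1 => \sum_u Pbeta_n P beta n' s u * Pbeta P beta u s'
  end.

(* ergodic (irreducible and aperiodic) finite chain: some power is positive *)
Definition ergodic_chain (P : S -> A -> S -> R) (beta : S -> A -> R) :=
  exists n, forall s s', 0 < Pbeta_n P beta n s s'.

Definition stationary (P : S -> A -> S -> R) (beta : S -> A -> R) (p : S -> R) :=
  forall s', p s' = \sum_s p s * Pbeta P beta s s'.

(* Q* : the optimal action-value function, i.e. the (unique) solution of the
   Bellman optimality equation; max_{a'} Q(s',a') is written as a big max
   seeded with the element Q(s',a) of the same finite set *)
Definition bellman_optimal (P : S -> A -> S -> R) (r : S -> A -> S -> R)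
  (gamma : R) (Qs : S -> A -> R) :=
  forall s a, Qs s a = \sum_s' P s a s' *
    (r s a s' + gamma * \big[Num.max/Qs s' a]_a' Qs s' a').

(* one SDQ update with the sample (s_k, a_k, s_{k+1});
   sel F is the (tie-broken) argmax of F : A -> R *)
Definition sdq_step (sel : (A -> R) -> A) (r : S -> A -> S -> R) (gamma alpha : R)
  (QQ : (S -> A -> R) * (S -> A -> R)) (x : S * A * S) :
  (S -> A -> R) * (S -> A -> R) :=
  let: (QA, QB) := QQ in
  let: (sk, ak, sk1) := x in
  (fun s a => if (s == sk) && (a == ak) then
      QA s a + alpha * (r sk ak sk1 + gamma * QA sk1 (sel (QB sk1)) - QA s a)
    else QA s a,
   fun s a => if (s == sk) && (a == ak) then
      QB s a + alpha * (r sk ak sk1 + gamma * QB sk1 (sel (QA sk1)) - QB s a)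
    else QB s a).

Definition sdq_run sel r gamma alpha (Q0 : (S -> A -> R) * (S -> A -> R))
  (t : seq (S * A * S)) := foldl (sdq_step sel r gamma alpha) Q0 t.

Definition sample_prob (d : S -> A -> R) (P : S -> A -> S -> R) (x : S * A * S) : R :=
  d x.1.1 x.1.2 * P x.1.1 x.1.2 x.2.

Definition sdq_expect (d : S -> A -> R) (P : S -> A -> S -> R) sel r gamma alpha Q0
  (k : nat) (f : (S -> A -> R) * (S -> A -> R) -> R) : R :=
  \sum_(t : k.-tuple (S * A * S))
     (\prod_(x <- t) sample_prob d P x) * f (sdq_run sel r gamma alpha Q0 t).

(* d_min (d sums to 1, so 1 is a neutral starting value) *)
Definition dmin (d : S -> A -> R) : R := \big[Num.min/1]_(sa : S * A) d sa.1 sa.2.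

End SDQ.

(* Main.v *)
Require Import Defs.
From HB Require Import structures.
From mathcomp Require Import all_boot all_order all_algebra.
From mathcomp Require Import all_classical all_reals all_analysis.
From mathcomp Require Import ring lra.
Import Order.TTheory GRing.Theory Num.Theory.
Local Open Scope ring_scope.
Section Expect.
Variables (R : realType) (X : finType) (w : X -> R).

Definition Ex (k : nat) (F : seq X -> R) : R :=
  \sum_(t : k.-tuple X) (\prod_(x <- t) w x) * F t.

Lemma sum_tuple_cons k (G : k.+1.-tuple X -> R) :
  \sum_(t : k.+1.-tuple X) G t = \sum_(x : X) \sum_(t : k.-tuple X) G [tuple of x :: t].
Proof.
rewrite pair_big /=.
rewrite (reindex (fun p : X * k.-tuple X => [tuple of p.1 :: p.2])) //=.
exists (fun t : k.+1.-tuple X => (thead t, [tuple of behead t])).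
  by case=> x t _ /=; congr (_, _); apply: val_inj.
by move=> t _ /=; apply: val_inj => /=; case: t => [[|x s] //=].
Qed.

Lemma Ex0 F : Ex 0 F = F [::].
Proof.
rewrite /Ex (big_pred1 [tuple]) /=; first by rewrite big_nil mul1r.
by move=> t; rewrite /=; apply/esym/eqP; apply: val_inj; case: t => [[]].
Qed.

Lemma Ex_cons k F : Ex k.+1 F = \sum_x w x * Ex k (fun t => F (x :: t)).
Proof.
rewrite /Ex sum_tuple_cons; apply: eq_bigr => x _.
rewrite mulr_sumr; apply: eq_bigr => t _ /=.
by rewrite big_cons mulrA.
Qed.

Lemma Ex_rcons k F : Ex k.+1 F = Ex k (fun t => \sum_x w x * F (rcons t x)).
Proof.
elim: k F => [|k IH] F.
  by rewrite Ex_cons Ex0; apply: eq_bigr => x _; rewrite Ex0.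
rewrite Ex_cons [RHS]Ex_cons; apply: eq_bigr => y _.
by rewrite IH.
Qed.

Hypothesis w_ge0 : forall x, 0 <= w x.
Hypothesis w_sum : \sum_x w x = 1.

Lemma Ex_mono k F G : (forall t, F t <= G t) -> Ex k F <= Ex k G.
Proof.
move=> FG; apply: ler_sum => t _; apply: ler_wpM2l => //.
by apply: prodr_ge0 => x _.
Qed.

Lemma Ex_const k c : Ex k (fun _ => c) = c.
Proof.
elim: k => [|k IH]; first by rewrite Ex0.
by rewrite Ex_cons; under eq_bigr do rewrite IH; rewrite -mulr_suml w_sum mul1r.
Qed.

Lemma Ex_add k F G : Ex k (fun t => F t + G t) = Ex k F + Ex k G.
Proof. by rewrite /Ex -big_split /=; apply: eq_bigr => t _; rewrite mulrDr. Qed.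

Lemma Ex_scale k c F : Ex k (fun t => c * F t) = c * Ex k F.
Proof. by rewrite /Ex mulr_sumr; apply: eq_bigr => t _; rewrite mulrCA. Qed.

Lemma Ex_sum (I : finType) k (F : I -> seq X -> R) :
  Ex k (fun t => \sum_i F i t) = \sum_i Ex k (F i).
Proof.
rewrite /Ex exchange_big /=; apply: eq_bigr => t _; by rewrite mulr_sumr.
Qed.

End Expect.
Arguments Ex {R X}.
Arguments Ex0 {R X}.
Arguments Ex_cons {R X}.
Arguments Ex_rcons {R X}.
Arguments Ex_mono {R X w}.
Arguments Ex_const {R X w}.
Arguments Ex_add {R X}.
Arguments Ex_scale {R X}.
Arguments Ex_sum {R X}.

Lemma rec_bound (R : realType) (u : nat -> R) (rh a b c : R) :
  0 <= rh -> rh < 1 -> 0 <= b -> 0 <= c -> u 0%N <= a ->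
  (forall k, u k.+1 <= rh * u k + c + b * rh ^+ k) ->
  forall k, u k <= rh ^+ k * a + c / (1 - rh) + b * (k%:R * rh ^+ k.-1).
Proof.
move=> r0 r1 b0 c0 u0 hu; have r1' : 0 < 1 - rh by rewrite subr_gt0.
elim=> [|k IH].
  rewrite expr0 mul1r mul0r mulr0 addr0.
  have : 0 <= c / (1 - rh) by apply: divr_ge0 => //; exact: ltW.
  lra.
apply: le_trans (hu k) _.
have key : rh * (k%:R * rh ^+ k.-1) = k%:R * rh ^+ k.
  by case: k {IH} => [|k] /=; rewrite ?mul0r ?mulr0 // exprS mulrCA.
have h1 := ler_wpM2l r0 IH.
have e : rh * (rh ^+ k * a + c / (1 - rh) + b * (k%:R * rh ^+ k.-1)) + c + b * rh ^+ k =
  rh ^+ k.+1 * a + c / (1 - rh) + b * (k.+1%:R * rh ^+ k.+1.-1).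
  have key' : rh * (b * (k%:R * rh ^+ k.-1)) = b * (k%:R * rh ^+ k) by rewrite mulrCA key.
  rewrite /= !mulrDr key' exprS -addn1 natrD.
  field; lra.
rewrite -e; lra.
Qed.


Section Sup.
Variables (R : realType) (S A : finType).

Lemma sup_ge0 (F : S -> A -> R) : 0 <= supnorm F.
Proof. by rewrite /supnorm; elim/big_ind: _ => // x y hx hy; rewrite le_max hx. Qed.

Lemma sup_ge (F : S -> A -> R) s a : `|F s a| <= supnorm F.
Proof. by rewrite /supnorm (bigD1 (s, a)) //= le_max lexx. Qed.

Lemma sup_le (F : S -> A -> R) c : 0 <= c -> (forall s a, `|F s a| <= c) -> supnorm F <= c.
Proof. by move=> c0 H; apply: bigmax_le => // [[s a]] _; apply: H. Qed.

Lemma max_sel (sel : (A -> R) -> A) (F : A -> R) a0 :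
  (forall (G : A -> R) a, G a <= G (sel G)) ->
  \big[Num.max/F a0]_a' F a' = F (sel F).
Proof.
move=> hsel; apply/eqP; rewrite eq_le; apply/andP; split.
  by apply: bigmax_le => // i _.
by rewrite (bigD1 (sel F)) //= le_max lexx.
Qed.
End Sup.
Arguments sup_ge0 {R S A}.
Arguments sup_ge {R S A}.
Arguments sup_le {R S A}.

Section SelLemmas.
Variables (R : realType) (A : finType) (sel : (A -> R) -> A).
Hypothesis hsel : forall (F : A -> R) a, F a <= F (sel F).

Lemma sel_gap (F G : A -> R) (D : R) : (forall a, `|F a - G a| <= D) ->
  F (sel F) - 2 * D <= F (sel G).
Proof.
move=> hD.
have h1 := hD (sel G); have h2 := hD (sel F); have h3 := hsel G (sel F).
move: h1 h2; rewrite !ler_norml => /andP[h1 h1'] /andP[h2 h2']; lra.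
Qed.

Lemma sel_diff (F G H : A -> R) (D E : R) : (forall a, `|F a - G a| <= D) ->
  (forall a, `|F a - H a| <= E) ->
  `|F (sel G) - H (sel H)| <= E + 2 * D.
Proof.
move=> hD hE; have g := @sel_gap F G D hD.
have h1 := hsel F (sel G); have h2 := hE (sel F); have h3 := hE (sel H).
have h4 := hsel H (sel F); have h5 := hsel F (sel H).
move: h2 h3; rewrite !ler_norml => /andP[h2 h2'] /andP[h3 h3'].
apply/andP; split; lra.
Qed.

Lemma sel_cross (F G : A -> R) (D : R) : (forall a, `|F a - G a| <= D) ->
  `|F (sel G) - G (sel F)| <= D.
Proof.
move=> hD.
have h1 := hsel F (sel G); have h2 := hD (sel F); have h3 := hD (sel G).
have h4 := hsel G (sel F).
move: h2 h3; rewrite !ler_norml => /andP[h2 h2'] /andP[h3 h3'].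
apply/andP; split; lra.
Qed.
End SelLemmas.

Section Model.
Variables (R : realType) (S A : finType).
Variables (P r : S -> A -> S -> R) (gamma alpha : R) (d : S -> A -> R).
Variables (Qstar : S -> A -> R) (sel : (A -> R) -> A) (Q0A Q0B : S -> A -> R).
Hypothesis hP : is_kernel P.
Hypothesis hr : forall s a s', `|r s a s'| <= 1.
Hypothesis hg0 : 0 < gamma.
Hypothesis hg1 : gamma < 1.
Hypothesis ha0 : 0 < alpha.
Hypothesis ha1 : alpha < 1.
Hypothesis hd : forall s a, 0 < d s a.
Hypothesis hdsum : \sum_(sa : S * A) d sa.1 sa.2 = 1.
Hypothesis hQ : bellman_optimal P r gamma Qstar.
Hypothesis hsel : forall (F : A -> R) a, F a <= F (sel F).
Hypothesis hQ0A : forall s a, `|Q0A s a| <= 1.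
Hypothesis hQ0B : forall s a, `|Q0B s a| <= 1.

Ltac lrah := have := hg0; have := hg1; have := ha0; have := ha1; lra.
Ltac nrah := have := hg0; have := hg1; have := ha0; have := ha1; nra.

Local Notation X := (S * A * S)%type.
Definition B : R := (1 - gamma)^-1.
Definition w (x : X) : R := sample_prob d P x.

Definition Tbar (QA QB : S -> A -> R) s a :=
  \sum_s' P s a s' * (r s a s' + gamma * QA s' (sel (QB s'))).
Definition ind s a (x : X) := (s == x.1.1) && (a == x.1.2).
Definition eps (QQ : (S -> A -> R) * (S -> A -> R)) (x : X) s a :=
  (if ind s a x then r x.1.1 x.1.2 x.2 + gamma * QQ.1 x.2 (sel (QQ.2 x.2)) - QQ.1 s a else 0)
  - d s a * (Tbar QQ.1 QQ.2 s a - QQ.1 s a).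
Definition gD (QQ : (S -> A -> R) * (S -> A -> R)) s' :=
  gamma * (QQ.1 s' (sel (QQ.2 s')) - QQ.2 s' (sel (QQ.1 s'))).
Definition gbar QQ s a := \sum_s' P s a s' * gD QQ s'.
Definition eta (QQ : (S -> A -> R) * (S -> A -> R)) (x : X) s a :=
  (if ind s a x then gD QQ x.2 - (QQ.1 s a - QQ.2 s a) else 0)
  - d s a * (gbar QQ s a - (QQ.1 s a - QQ.2 s a)).

Definition stT := (((S -> A -> R) * (S -> A -> R)) * (S -> A -> R) * (S -> A -> R))%type.
Definition ext_step (st : stT) (x : X) : stT :=
  (sdq_step sel r gamma alpha st.1.1 x,
   fun s a => (1 - alpha * d s a) * st.1.2 s a + alpha * eps st.1.1 x s a,
   fun s a => (1 - alpha * d s a) * st.2 s a + alpha * eta st.1.1 x s a).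
Definition ext_run (t : seq X) : stT :=
  foldl ext_step ((Q0A, Q0B), fun _ _ => 0, fun _ _ => 0) t.

Lemma foldl_fst st t : (foldl ext_step st t).1.1 = foldl (sdq_step sel r gamma alpha) st.1.1 t.
Proof. by elim: t st => [|x t IH] st //=; rewrite IH. Qed.

Lemma run_fst t : (ext_run t).1.1 = sdq_run sel r gamma alpha (Q0A, Q0B) t.
Proof. by rewrite /ext_run foldl_fst. Qed.

Lemma stepA (QQ : (S -> A -> R) * (S -> A -> R)) x s a :
  (sdq_step sel r gamma alpha QQ x).1 s a =
  QQ.1 s a + alpha * (eps QQ x s a + d s a * (Tbar QQ.1 QQ.2 s a - QQ.1 s a)).
Proof.
case: QQ => QA QB; case: x => [[s0 a0] s1]; rewrite /eps /ind /=.
case: ifP => _; ring.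
Qed.

Lemma stepD (QQ : (S -> A -> R) * (S -> A -> R)) x s a :
  (sdq_step sel r gamma alpha QQ x).1 s a - (sdq_step sel r gamma alpha QQ x).2 s a =
  (QQ.1 s a - QQ.2 s a) + alpha * (eta QQ x s a + d s a * (gbar QQ s a - (QQ.1 s a - QQ.2 s a))).
Proof.
case: QQ => QA QB; case: x => [[s0 a0] s1]; rewrite /eta /gD /ind /=.
case: ifP => _; ring.
Qed.

Lemma bellman_sel s a :
  Qstar s a = \sum_s' P s a s' * (r s a s' + gamma * Qstar s' (sel (Qstar s'))).
Proof.
rewrite hQ; apply: eq_bigr => s' _; by rewrite (@max_sel _ _ sel).
Qed.

Lemma kernel_avg s a (h : S -> R) c :
  (forall s', `|h s'| <= c) -> `|\sum_s' P s a s' * h s'| <= c.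
Proof.
move=> hh; have [hP0 hP1] := hP s a.
apply: le_trans (ler_norm_sum _ _ _) _.
apply: (@le_trans _ _ (\sum_s' P s a s' * c)).
  apply: ler_sum => s' _; rewrite normrM ger0_norm //; exact: ler_wpM2l.
by rewrite -mulr_suml hP1 mul1r.
Qed.

Lemma sumX (F : X -> R) : \sum_(x : X) F x = \sum_(sa : S * A) \sum_(s1 : S) F (sa, s1).
Proof. by rewrite pair_big /=; apply: eq_bigr => -[]. Qed.

Lemma d_ge0 s a : 0 <= d s a. Proof. exact: ltW. Qed.

Lemma w_ge0 x : 0 <= w x.
Proof. rewrite /w /sample_prob; apply: mulr_ge0; [exact: d_ge0 | by have [] := hP x.1.1 x.1.2]. Qed.

Lemma w_sum : \sum_x w x = 1.
Proof.
rewrite sumX -hdsum; apply: eq_bigr => -[s a] _ /=.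
have [_ h1] := hP s a.
by rewrite /w /sample_prob /= -mulr_sumr h1 mulr1.
Qed.

Lemma sum_ind s a (H : X -> R) :
  \sum_x w x * (if ind s a x then H x else 0) = d s a * \sum_s1 P s a s1 * H (s, a, s1).
Proof.
rewrite sumX (bigD1 (s, a)) //=.
rewrite [X in _ + X]big1 ?addr0.
  rewrite mulr_sumr; apply: eq_bigr => s1 _.
  by rewrite /ind /= !eqxx /w /sample_prob /= mulrA.
move=> [s0 a0] hne; apply: big1 => s1 _.
rewrite /ind /=; case: ifP; last by rewrite mulr0.
by move=> /andP[/eqP e1 /eqP e2]; move: hne; rewrite e1 e2 eqxx.
Qed.

Lemma kernel_sub s a (g : S -> R) c :
  \sum_s1 P s a s1 * (g s1 - c) = \sum_s1 P s a s1 * g s1 - c.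
Proof.
have [_ h1] := hP s a.
under eq_bigr do rewrite mulrBr.
by rewrite sumrB -mulr_suml h1 mul1r.
Qed.

Lemma sum_const_w c : \sum_x w x * c = c.
Proof. by rewrite -mulr_suml w_sum mul1r. Qed.

Lemma eps_mean QQ s a : \sum_x w x * eps QQ x s a = 0.
Proof.
rewrite /eps; under eq_bigr do rewrite mulrBr.
rewrite sumrB sum_const_w.
rewrite sum_ind /= kernel_sub /Tbar; exact: subrr.
Qed.

Lemma eta_mean QQ s a : \sum_x w x * eta QQ x s a = 0.
Proof.
rewrite /eta; under eq_bigr do rewrite mulrBr.
rewrite sumrB sum_const_w.
rewrite sum_ind /= kernel_sub /gbar; exact: subrr.
Qed.

Lemma B_ge1 : 1 <= B.
Proof. have h : 0 < 1 - gamma by rewrite subr_gt0.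
rewrite /B (invf_ge1 h); lrah. Qed.
Lemma B_eq : 1 + gamma * B = B.
Proof. rewrite /B; field; lrah. Qed.

Lemma d_le1 s a : d s a <= 1.
Proof.
rewrite -hdsum (bigD1 (s, a)) //= lerDl; apply: sumr_ge0 => i _; exact: d_ge0.
Qed.

Definition bnd (Q : S -> A -> R) := forall s a, `|Q s a| <= B.

Lemma conv_bound (a b u c : R) : 0 <= u <= 1 -> `|a| <= c -> `|b| <= c -> `|a + u * (b - a)| <= c.
Proof.
move=> /andP[u0 u1] ha hb.
rewrite (_ : a + u * (b - a) = (1 - u) * a + u * b); last by ring.
have h1 : 0 <= 1 - u by lra.
apply: le_trans (ler_normD _ _) _; rewrite !normrM (ger0_norm h1) (ger0_norm u0).
have h2 : 0 <= (1 - u) * (c - `|a|) by apply: mulr_ge0 => //; lra.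
have h3 : 0 <= u * (c - `|b|) by apply: mulr_ge0 => //; lra.
nra.
Qed.

Lemma target_bound (QA : S -> A -> R) s0 a0 s1 b : bnd QA -> `|r s0 a0 s1 + gamma * QA s1 b| <= B.
Proof.
move=> hA; apply: le_trans (ler_normD _ _) _; rewrite normrM (gtr0_norm hg0).
have := hr s0 a0 s1; have := hA s1 b; have := B_eq; nrah.
Qed.

Lemma step_bnd QQ x : bnd QQ.1 -> bnd QQ.2 ->
  bnd (sdq_step sel r gamma alpha QQ x).1 /\ bnd (sdq_step sel r gamma alpha QQ x).2.
Proof.
case: QQ => QA QB; case: x => [[s0 a0] s1] /= hA hB; split => s a /=; case: ifP => _ //.
  apply: conv_bound => //; first by apply/andP; split; lrah.
  exact: target_bound.
apply: conv_bound => //; first by apply/andP; split; lrah.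
exact: target_bound.
Qed.

Lemma run_bnd t : bnd (ext_run t).1.1.1 /\ bnd (ext_run t).1.1.2.
Proof.
rewrite run_fst /sdq_run.
have : bnd (Q0A, Q0B).1 /\ bnd (Q0A, Q0B).2.
  by split => s a /=; apply: le_trans B_ge1.
elim: t (Q0A, Q0B) => [|x t IH] QQ //= [h1 h2].
apply: IH; exact: step_bnd.
Qed.

Lemma Tbar_bound QA QB s a : bnd QA -> `|Tbar QA QB s a| <= B.
Proof. move=> hA; apply: kernel_avg => s'; exact: target_bound. Qed.

Lemma eps_bound QQ x s a : bnd QQ.1 -> bnd QQ.2 -> `|eps QQ x s a| <= 8 * B.
Proof.
move=> hA hB; rewrite /eps.
apply: le_trans (ler_normB _ _) _.
have h1 : `|(if ind s a x then r x.1.1 x.1.2 x.2 + gamma * QQ.1 x.2 (sel (QQ.2 x.2)) - QQ.1 s a else 0)| <= 2 * B.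
  case: ifP => _; last by rewrite normr0; have := B_ge1; lra.
  apply: le_trans (ler_normB _ _) _; have := target_bound QQ.1 x.1.1 x.1.2 x.2 (sel (QQ.2 x.2)) hA; have := hA s a; lra.
have h2 : `|d s a * (Tbar QQ.1 QQ.2 s a - QQ.1 s a)| <= 2 * B.
  rewrite normrM (gtr0_norm (hd s a)).
  have h3 : `|Tbar QQ.1 QQ.2 s a - QQ.1 s a| <= 2 * B.
    apply: le_trans (ler_normB _ _) _; have := Tbar_bound QQ.1 QQ.2 s a hA; have := hA s a; lra.
  have := d_le1 s a; have := hd s a; have := normr_ge0 (Tbar QQ.1 QQ.2 s a - QQ.1 s a); nra.
have := B_ge1; lra.
Qed.

Lemma gD_bound QQ s' : bnd QQ.1 -> bnd QQ.2 -> `|gD QQ s'| <= 2 * B.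
Proof.
move=> hA hB; rewrite /gD normrM (gtr0_norm hg0).
have h : `|QQ.1 s' (sel (QQ.2 s')) - QQ.2 s' (sel (QQ.1 s'))| <= 2 * B.
  apply: (@sel_cross _ _ sel hsel) => a.
  apply: le_trans (ler_normB _ _) _; have := hA s' a; have := hB s' a; lra.
have := normr_ge0 (QQ.1 s' (sel (QQ.2 s')) - QQ.2 s' (sel (QQ.1 s'))); nrah.
Qed.

Lemma eta_bound QQ x s a : bnd QQ.1 -> bnd QQ.2 -> `|eta QQ x s a| <= 8 * B.
Proof.
move=> hA hB; rewrite /eta.
apply: le_trans (ler_normB _ _) _.
have hD : `|QQ.1 s a - QQ.2 s a| <= 2 * B.
  apply: le_trans (ler_normB _ _) _; have := hA s a; have := hB s a; lra.
have h1 : `|(if ind s a x then gD QQ x.2 - (QQ.1 s a - QQ.2 s a) else 0)| <= 4 * B.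
  case: ifP => _; last by rewrite normr0; have := B_ge1; lra.
  apply: le_trans (ler_normB _ _) _; have := gD_bound QQ x.2 hA hB; lra.
have h2 : `|d s a * (gbar QQ s a - (QQ.1 s a - QQ.2 s a))| <= 4 * B.
  rewrite normrM (gtr0_norm (hd s a)).
  have h3 : `|gbar QQ s a - (QQ.1 s a - QQ.2 s a)| <= 4 * B.
    apply: le_trans (ler_normB _ _) _.
    have : `|gbar QQ s a| <= 2 * B by apply: kernel_avg => s'; exact: gD_bound.
    lra.
  have := d_le1 s a; have := hd s a; have := normr_ge0 (gbar QQ s a - (QQ.1 s a - QQ.2 s a)); nra.
lra.
Qed.

Definition dm := dmin d.
Definition rho := 1 - alpha * dm * (1 - gamma).

Lemma dm_le s a : dm <= d s a.
Proof. by rewrite /dm /dmin (bigD1 (s, a)) //= ge_min lexx. Qed.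

Lemma dm_gt0 : 0 < dm.
Proof. rewrite /dm /dmin; elim/big_ind: _ => [|x y hx hy|i _]; [exact: ltr01 | by rewrite lt_min hx hy | exact: hd]. Qed.

Lemma dm_le1 : dm <= 1.
Proof. rewrite /dm /dmin; elim/big_ind: _ => [|x y hx hy|i _]; [by [] | by rewrite ge_min hx | exact: d_le1]. Qed.

Lemma q_pos : 0 < alpha * dm * (1 - gamma).
Proof. apply: mulr_gt0; [apply: mulr_gt0 => //; exact: dm_gt0 | by rewrite subr_gt0]. Qed.

Lemma q_lt1 : alpha * dm * (1 - gamma) < 1.
Proof.
have h1 : dm * (1 - gamma) <= 1.
  apply: mulr_ile1; [exact: ltW dm_gt0 | lrah | exact: dm_le1 | lrah].
have h2 : 0 <= dm * (1 - gamma) by apply: mulr_ge0; [exact: ltW dm_gt0 | lrah].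
rewrite -mulrA; apply: le_lt_trans ha1; rewrite ler_piMr //; exact: ltW.
Qed.

Lemma rho_ge0 : 0 <= rho.
Proof. rewrite /rho; have := q_lt1; lra. Qed.
Lemma rho_gt0 : 0 < rho.
Proof. rewrite /rho; have := q_lt1; lra. Qed.
Lemma rho_lt1 : rho < 1.
Proof. rewrite /rho; have := q_pos; lra. Qed.

Lemma contr_arith (ds Y Z v : R) : dm <= ds <= 1 -> 0 <= Y -> 0 <= Z ->
  `|v| <= (1 - alpha * ds) * Y + alpha * ds * gamma * (Y + Z) -> `|v| <= rho * Y + alpha * gamma * Z.
Proof.
move=> /andP[h1 h2] hY hZ hv; apply: le_trans hv _; rewrite /rho.
have e1 : 0 <= alpha * (1 - gamma) * Y * (ds - dm).
  apply: mulr_ge0; last by lra.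
  apply: mulr_ge0 => //; apply: mulr_ge0; lrah.
have e2 : 0 <= alpha * gamma * Z * (1 - ds).
  apply: mulr_ge0; last by lra.
  apply: mulr_ge0 => //; apply: mulr_ge0; lrah.
lra.
Qed.

Definition yv (st : stT) s a := st.1.1.1 s a - Qstar s a - st.1.2 s a.
Definition zv (st : stT) s a := (st.1.1.1 s a - st.1.1.2 s a) - st.2 s a.
Definition Yn st := supnorm (yv st).
Definition Zn st := supnorm (zv st).
Definition Nn (st : stT) := supnorm st.1.2.
Definition Mn (st : stT) := supnorm st.2.

Lemma yv_step st x s a :
  yv (ext_step st x) s a = (1 - alpha * d s a) * yv st s a + alpha * d s a * (Tbar st.1.1.1 st.1.1.2 s a - Qstar s a).
Proof. rewrite /yv /ext_step /= stepA; ring. Qed.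

Lemma zv_step st x s a :
  zv (ext_step st x) s a = (1 - alpha * d s a) * zv st s a + alpha * d s a * gbar st.1.1 s a.
Proof. rewrite /zv /ext_step /= stepD /gbar; ring. Qed.

Lemma Tbar_err QA QB (E D : R) s a : (forall s a, `|QA s a - Qstar s a| <= E) ->
  (forall s a, `|QA s a - QB s a| <= D) -> `|Tbar QA QB s a - Qstar s a| <= gamma * (E + 2 * D).
Proof.
move=> hE hD; rewrite bellman_sel /Tbar -sumrB.
rewrite (eq_bigr (fun s' => P s a s' * (gamma * (QA s' (sel (QB s')) - Qstar s' (sel (Qstar s')))))); last first.
  by move=> s' _; ring.
apply: kernel_avg => s'; rewrite normrM (gtr0_norm hg0); apply: ler_wpM2l; first by lrah.
by apply: (@sel_diff _ _ sel hsel) => b; [apply: hD | apply: hE].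
Qed.

Lemma gbar_err QQ (D : R) s a : (forall s a, `|QQ.1 s a - QQ.2 s a| <= D) -> `|gbar QQ s a| <= gamma * D.
Proof.
move=> hD; apply: kernel_avg => s'; rewrite /gD normrM (gtr0_norm hg0); apply: ler_wpM2l; first by lrah.
by apply: (@sel_cross _ _ sel hsel) => b; apply: hD.
Qed.

Lemma Y_step st x : Yn (ext_step st x) <= rho * Yn st + alpha * gamma * (Nn st + 2 * Zn st + 2 * Mn st).
Proof.
have hY := sup_ge0 (yv st); have hN := sup_ge0 st.1.2; have hZ := sup_ge0 (zv st); have hM := sup_ge0 st.2.
apply: sup_le.
  apply: addr_ge0; first by apply: mulr_ge0 => //; exact: rho_ge0.
  apply: mulr_ge0; first by apply: mulr_ge0; lrah.
  by rewrite /Nn /Zn /Mn; lra.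
move=> s a; apply: (@contr_arith (d s a)) => //; first by rewrite dm_le d_le1.
  by rewrite /Nn /Zn /Mn; lra.
rewrite yv_step; apply: le_trans (ler_normD _ _) _.
rewrite !normrM.
have hda : 0 < d s a := hd s a.
have e1 : `|1 - alpha * d s a| = 1 - alpha * d s a.
  apply: ger0_norm; have := d_le1 s a; nrah.
rewrite e1 (ger0_norm (ltW ha0)) (gtr0_norm hda).
have t1 : `|yv st s a| <= Yn st by exact: sup_ge.
have t2 : `|Tbar st.1.1.1 st.1.1.2 s a - Qstar s a| <= gamma * ((Yn st + Nn st) + 2 * (Zn st + Mn st)).
  apply: Tbar_err => s' a'.
    rewrite (_ : st.1.1.1 s' a' - Qstar s' a' = yv st s' a' + st.1.2 s' a'); last by rewrite /yv; ring.
    apply: le_trans (ler_normD _ _) _; apply: lerD; [exact: sup_ge | exact: sup_ge].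
  rewrite (_ : st.1.1.1 s' a' - st.1.1.2 s' a' = zv st s' a' + st.2 s' a'); last by rewrite /zv; ring.
  apply: le_trans (ler_normD _ _) _; apply: lerD; [exact: sup_ge | exact: sup_ge].
have f1 : 0 <= 1 - alpha * d s a by have := d_le1 s a; nrah.
have f2 : 0 <= alpha * d s a by apply: mulr_ge0; lrah.
have g1 := ler_wpM2l f1 t1.
have g2 := ler_wpM2l f2 t2.
rewrite /Yn /Nn /Zn /Mn in g1 g2 *.
lra.
Qed.

Lemma Z_step st x : Zn (ext_step st x) <= rho * Zn st + alpha * gamma * Mn st.
Proof.
have hZ := sup_ge0 (zv st); have hM := sup_ge0 st.2.
apply: sup_le.
  apply: addr_ge0; first by apply: mulr_ge0 => //; exact: rho_ge0.
  apply: mulr_ge0; first by apply: mulr_ge0; lrah.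
  done.
move=> s a; apply: (@contr_arith (d s a)) => //; first by rewrite dm_le d_le1.
rewrite zv_step; apply: le_trans (ler_normD _ _) _.
rewrite !normrM.
have hda : 0 < d s a := hd s a.
have e1 : `|1 - alpha * d s a| = 1 - alpha * d s a.
  apply: ger0_norm; have := d_le1 s a; nrah.
rewrite e1 (ger0_norm (ltW ha0)) (gtr0_norm hda).
have t1 : `|zv st s a| <= Zn st by exact: sup_ge.
have t2 : `|gbar st.1.1 s a| <= gamma * (Zn st + Mn st).
  apply: gbar_err => s' a'.
  rewrite (_ : st.1.1.1 s' a' - st.1.1.2 s' a' = zv st s' a' + st.2 s' a'); last by rewrite /zv; ring.
  apply: le_trans (ler_normD _ _) _; apply: lerD; [exact: sup_ge | exact: sup_ge].
have f1 : 0 <= 1 - alpha * d s a by have := d_le1 s a; nrah.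
have f2 : 0 <= alpha * d s a by apply: mulr_ge0; lrah.
have g1 := ler_wpM2l f1 t1.
have g2 := ler_wpM2l f2 t2.
rewrite /Zn /Mn in g1 g2 *.
lra.
Qed.

Definition Ek k (f : stT -> R) := Ex w k (fun t => f (ext_run t)).

Lemma avg_le (F : X -> R) c : (forall x, F x <= c) -> \sum_x w x * F x <= c.
Proof.
move=> hF; apply: le_trans (_ : \sum_x w x * c <= c); last by rewrite sum_const_w.
by apply: ler_sum => x _; apply: ler_wpM2l => //; exact: w_ge0.
Qed.

Lemma Ek_step k f g : (forall t, \sum_x w x * f (ext_step (ext_run t) x) <= g (ext_run t)) ->
  Ek k.+1 f <= Ek k g.
Proof.
move=> h; rewrite /Ek Ex_rcons; apply: (Ex_mono w_ge0) => t.
by under eq_bigr do rewrite /ext_run foldl_rcons; apply: h.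
Qed.

Lemma sum_sq (a c : R) (e : X -> R) : \sum_x w x * e x = 0 ->
  \sum_x w x * (a + c * e x) ^+ 2 = a ^+ 2 + c ^+ 2 * \sum_x w x * e x ^+ 2.
Proof.
move=> he.
rewrite (eq_bigr (fun x => a ^+ 2 * w x + (2 * a * c) * (w x * e x) + c ^+ 2 * (w x * e x ^+ 2))); last first.
  by move=> x _; ring.
rewrite !big_split /= -!mulr_sumr w_sum he; ring.
Qed.

Definition K : R := 64 * alpha * B ^+ 2 / dm.

Lemma noise2 (proj : stT -> S -> A -> R) (noise : (S -> A -> R) * (S -> A -> R) -> X -> S -> A -> R) :
  (forall st x s a, proj (ext_step st x) s a = (1 - alpha * d s a) * proj st s a + alpha * noise st.1.1 x s a) ->
  (forall s a, proj ((Q0A, Q0B), fun _ _ => 0, fun _ _ => 0) s a = 0) ->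
  (forall QQ s a, \sum_x w x * noise QQ x s a = 0) ->
  (forall QQ x s a, bnd QQ.1 -> bnd QQ.2 -> `|noise QQ x s a| <= 8 * B) ->
  forall k s a, Ek k (fun st => proj st s a ^+ 2) <= K.
Proof.
move=> hstep h0 hmean hbnd k s a.
have hK0 : 0 <= K.
  rewrite /K; apply: divr_ge0; last exact: ltW dm_gt0.
  apply: mulr_ge0; [apply: mulr_ge0; lrah | exact: sqr_ge0].
elim: k => [|k IH].
  by rewrite /Ek Ex0 /ext_run /= h0 expr0n.
set u := 1 - alpha * d s a.
apply: le_trans (@Ek_step k _ (fun st => u ^+ 2 * proj st s a ^+ 2 + alpha ^+ 2 * (8 * B) ^+ 2) _) _.
  move=> t; under eq_bigr do rewrite hstep.
  rewrite sum_sq // -/u exprMn; apply: lerD => //; apply: ler_wpM2l; first exact: sqr_ge0.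
  apply: avg_le => x; have [hA hB] := run_bnd t.
  have := hbnd (ext_run t).1.1 x s a hA hB; have := normr_ge0 (noise (ext_run t).1.1 x s a).
  rewrite -(real_normK (num_real (noise _ x s a))); have := B_ge1; nra.
rewrite /Ek Ex_add (Ex_scale w k (u ^+ 2) (fun t => proj (ext_run t) s a ^+ 2)) (Ex_const w_sum).
have hu0 : 0 <= u by rewrite /u; have := d_le1 s a; nrah.
have hu1 : u <= 1 by rewrite /u; have := hd s a; nrah.
have h1 := ler_wpM2l (sqr_ge0 u) IH.
apply: le_trans (_ : _ <= u ^+ 2 * K + alpha ^+ 2 * (8 * B) ^+ 2) _.
  by apply: lerD => //; exact: h1.
have hKd : dm * K = 64 * alpha * B ^+ 2.
  rewrite /K; field; have := dm_gt0; lra.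
have e1 : 0 <= alpha * K * (d s a - dm).
  apply: mulr_ge0; [apply: mulr_ge0 => //; lrah | have := dm_le s a; lra].
have e2 : 0 <= alpha * K * d s a * (1 - alpha * d s a).
  apply: mulr_ge0; last by have := d_le1 s a; nrah.
  apply: mulr_ge0; [apply: mulr_ge0 => //; lrah | exact: ltW].
have e3 : alpha ^+ 2 * (8 * B) ^+ 2 = alpha * dm * K.
  by rewrite -mulrA hKd; ring.
rewrite e3 /u; nra.
Qed.

Lemma N2 k s a : Ek k (fun st => st.1.2 s a ^+ 2) <= K.
Proof.
apply: (@noise2 (fun st => st.1.2) eps) => //.
- exact: eps_mean.
- move=> QQ x s' a' hA hB; exact: eps_bound.
Qed.

Lemma M2 k s a : Ek k (fun st => st.2 s a ^+ 2) <= K.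
Proof.
apply: (@noise2 (fun st => st.2) eta) => //.
- exact: eta_mean.
- move=> QQ x s' a' hA hB; exact: eta_bound.
Qed.

Definition nSA : R := #|{: S * A}|%:R.
Definition sqa : R := Num.sqrt alpha.
Definition nu : R := 8 * B * sqa * nSA / dm.

Lemma nSA_ge1 : 1 <= nSA.
Proof.
rewrite /nSA ler1n; apply/card_gt0P.
case: (pickP (@predT (S * A))) => [sa _|h]; first by exists sa.
move: hdsum; rewrite big_pred0 // => /esym/eqP; by rewrite oner_eq0.
Qed.

Lemma sqa_gt0 : 0 < sqa.
Proof. by rewrite /sqa sqrtr_gt0. Qed.

Lemma nu_gt0 : 0 < nu.
Proof.
rewrite /nu; apply: divr_gt0; last exact: dm_gt0.
apply: mulr_gt0; last by have := nSA_ge1; lra.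
apply: mulr_gt0; last exact: sqa_gt0.
have := B_ge1; lra.
Qed.

Lemma sup_quad (F : S -> A -> R) c : 0 < c ->
  supnorm F <= (2 * c)^-1 * (\sum_(sa : S * A) F sa.1 sa.2 ^+ 2) + c / 2.
Proof.
move=> c0.
have hs : 0 <= \sum_(sa : S * A) F sa.1 sa.2 ^+ 2 by apply: sumr_ge0 => i _; exact: sqr_ge0.
apply: sup_le.
  apply: addr_ge0; last by apply: divr_ge0; lra.
  apply: mulr_ge0 => //; rewrite invr_ge0; lra.
move=> s a.
have h1 : F s a ^+ 2 <= \sum_(sa : S * A) F sa.1 sa.2 ^+ 2.
  rewrite (bigD1 (s, a)) //= lerDl; apply: sumr_ge0 => i _; exact: sqr_ge0.
have h2 : `|F s a| <= (2 * c)^-1 * F s a ^+ 2 + c / 2.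
  rewrite -(real_normK (num_real (F s a))).
  set y := `|F s a|.
  have e : (2 * c)^-1 * y ^+ 2 + c / 2 - y = (y - c) ^+ 2 / (2 * c) by field; lra.
  have : 0 <= (y - c) ^+ 2 / (2 * c) by apply: divr_ge0; [exact: sqr_ge0 | lra].
  rewrite -e subr_ge0 => //.
apply: le_trans h2 _; apply: lerD => //; apply: ler_wpM2l => //; rewrite invr_ge0; lra.
Qed.

Lemma noise_norm (proj : stT -> S -> A -> R) k :
  (forall s a, Ek k (fun st => proj st s a ^+ 2) <= K) ->
  Ek k (fun st => supnorm (proj st)) <= nu.
Proof.
move=> h2.
have c0 := nu_gt0.
rewrite /Ek.
apply: (le_trans (Ex_mono w_ge0 k _ (fun t => (2 * nu)^-1 * (\sum_(sa : S * A) proj (ext_run t) sa.1 sa.2 ^+ 2) + nu / 2) _)).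
  move=> t; exact: sup_quad.
rewrite Ex_add (Ex_scale w k _ (fun t => \sum_(sa : S * A) proj (ext_run t) sa.1 sa.2 ^+ 2)).
rewrite (Ex_const w_sum) (Ex_sum w (S * A)%type k (fun sa t => proj (ext_run t) sa.1 sa.2 ^+ 2)).
have hs : \sum_(sa : S * A) Ex w k (fun t => proj (ext_run t) sa.1 sa.2 ^+ 2) <= nSA * K.
  apply: le_trans (_ : \sum_(sa : S * A) K <= _).
    apply: ler_sum => sa _; exact: h2.
  by rewrite sumr_const /nSA mulr_natl.
have hK : nSA * K <= nu ^+ 2.
  rewrite /K /nu.
  have hq : sqa ^+ 2 = alpha by rewrite /sqa sqr_sqrtr //; exact: ltW.
  have hn := nSA_ge1; have hdm := dm_gt0; have hdm1 := dm_le1.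
  have e : (8 * B * sqa * nSA / dm) ^+ 2 = 64 * alpha * B ^+ 2 / dm * (nSA ^+ 2 / dm).
    rewrite -hq; field; lra.
  rewrite e [nSA * _]mulrC; apply: ler_wpM2l.
    apply: divr_ge0; last lra.
    apply: mulr_ge0; [apply: mulr_ge0; lrah | exact: sqr_ge0].
  rewrite ler_pdivlMr //; nra.
have h3 : (2 * nu)^-1 * \sum_(sa : S * A) Ex w k (fun t => proj (ext_run t) sa.1 sa.2 ^+ 2) <= (2 * nu)^-1 * nu ^+ 2.
  apply: ler_wpM2l; first by rewrite invr_ge0; lra.
  exact: le_trans hs hK.
have e : (2 * nu)^-1 * nu ^+ 2 = nu / 2 by field; lra.
lra.
Qed.

Lemma Nn_E k : Ek k Nn <= nu.
Proof. exact: (noise_norm (fun st => st.1.2) k (N2 k)). Qed.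
Lemma Mn_E k : Ek k Mn <= nu.
Proof. exact: (noise_norm (fun st => st.2) k (M2 k)). Qed.

Lemma Qstar_bnd s a : `|Qstar s a| <= B.
Proof.
set m := supnorm Qstar.
have hm0 : 0 <= m := sup_ge0 Qstar.
have hg : 0 <= 1 + gamma * m by apply: addr_ge0 => //; apply: mulr_ge0 => //; lrah.
have h1 : m <= 1 + gamma * m.
  apply: sup_le => // s' a'; rewrite bellman_sel; apply: kernel_avg => s''.
  apply: le_trans (ler_normD _ _) _; rewrite normrM (gtr0_norm hg0); apply: lerD; first exact: hr.
  apply: ler_wpM2l; [lrah | exact: sup_ge].
have h2 : m <= B.
  rewrite /B; have h : 0 < 1 - gamma by rewrite subr_gt0.
  have hm1 : m * (1 - gamma) <= 1 by lra.
  have -> : m = m * (1 - gamma) * (1 - gamma)^-1 by field; lra.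
  apply: le_trans (_ : 1 * (1 - gamma)^-1 <= _); last by rewrite mul1r.
  by apply: ler_wpM2r => //; rewrite invr_ge0; lra.
exact: le_trans (sup_ge Qstar s a) h2.
Qed.

Lemma Ek_lin k (c1 c2 : R) (f g : stT -> R) :
  Ek k (fun st => c1 * f st + c2 * g st) = c1 * Ek k f + c2 * Ek k g.
Proof.
rewrite /Ek Ex_add (Ex_scale w k c1 (fun t => f (ext_run t))).
by rewrite (Ex_scale w k c2 (fun t => g (ext_run t))).
Qed.

Definition init : stT := ((Q0A, Q0B), fun _ _ => 0, fun _ _ => 0).

Lemma Z_E k : Ek k Zn <= rho ^+ k * 2 + alpha * gamma * nu / (1 - rho) + 0 * (k%:R * rho ^+ k.-1).
Proof.
apply: (@rec_bound _ (fun k => Ek k Zn)).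
- exact: rho_ge0.
- exact: rho_lt1.
- done.
- apply: mulr_ge0; [apply: mulr_ge0; lrah | exact: ltW nu_gt0].
- rewrite /Ek Ex0 /ext_run /=; apply: sup_le => // s a; rewrite /zv /= subr0.
  apply: le_trans (ler_normB _ _) _; have := hQ0A s a; have := hQ0B s a; lra.
move=> j; rewrite mul0r addr0.
apply: le_trans (@Ek_step j _ (fun st => rho * Zn st + alpha * gamma * Mn st) _) _.
  move=> t; apply: avg_le => x; exact: Z_step.
rewrite Ek_lin; apply: lerD => //; apply: ler_wpM2l; first by apply: mulr_ge0; lrah.
exact: Mn_E.
Qed.

Definition cY := alpha * gamma * (3 * nu + 2 * (alpha * gamma * nu / (1 - rho))).

Lemma Y_E k : Ek k Yn <= rho ^+ k * (1 + B) + cY / (1 - rho) + (4 * alpha * gamma) * (k%:R * rho ^+ k.-1).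
Proof.
have hag : 0 <= alpha * gamma by apply: mulr_ge0; lrah.
apply: (@rec_bound _ (fun k => Ek k Yn)).
- exact: rho_ge0.
- exact: rho_lt1.
- by apply: mulr_ge0 => //; lrah.
- rewrite /cY; apply: mulr_ge0 => //; apply: addr_ge0.
    by apply: mulr_ge0; [lra | exact: ltW nu_gt0].
  apply: mulr_ge0; first lra.
  apply: divr_ge0; [apply: mulr_ge0 => //; exact: ltW nu_gt0 | have := rho_lt1; lra].
- rewrite /Ek Ex0 /ext_run /=; apply: sup_le; first by have := B_ge1; lra.
  move=> s a; rewrite /yv /= subr0.
  apply: le_trans (ler_normB _ _) _; have := hQ0A s a; have := Qstar_bnd s a; lra.
move=> j.
apply: le_trans (@Ek_step j _ (fun st => rho * Yn st + alpha * gamma * (Nn st + 2 * Zn st + 2 * Mn st)) _) _.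
  move=> t; apply: avg_le => x; exact: Y_step.
rewrite Ek_lin.
have hlin : Ek j (fun st => Nn st + 2 * Zn st + 2 * Mn st) = Ek j Nn + 2 * Ek j Zn + 2 * Ek j Mn.
  rewrite /Ek !Ex_add (Ex_scale w j 2 (fun t => Zn (ext_run t))).
  by rewrite (Ex_scale w j 2 (fun t => Mn (ext_run t))).
rewrite hlin.
have h1 := Nn_E j; have h2 := Z_E j; have h3 := Mn_E j.
rewrite mul0r addr0 in h2.
have h4 : Ek j Nn + 2 * Ek j Zn + 2 * Ek j Mn <= 3 * nu + 2 * (alpha * gamma * nu / (1 - rho)) + 4 * rho ^+ j.
  lra.
have h5 := ler_wpM2l hag h4.
rewrite /cY; lra.
Qed.

Theorem model_bound k :
  sdq_expect d P sel r gamma alpha (Q0A, Q0B) k (fun QQ => supnorm (fun s a => QQ.1 s a - Qstar s a)) <=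
  rho ^+ k * (1 + B) + cY / (1 - rho) + (4 * alpha * gamma) * (k%:R * rho ^+ k.-1) + nu.
Proof.
have -> : sdq_expect d P sel r gamma alpha (Q0A, Q0B) k (fun QQ => supnorm (fun s a => QQ.1 s a - Qstar s a))
  = Ek k (fun st => supnorm (fun s a => st.1.1.1 s a - Qstar s a)).
  by rewrite /Ek /Ex /sdq_expect; apply: eq_bigr => t _; rewrite run_fst.
apply: le_trans (_ : Ek k (fun st => Yn st + Nn st) <= _).
  apply: (Ex_mono w_ge0) => t; apply: sup_le.
    by apply: addr_ge0; exact: sup_ge0.
  move=> s a; rewrite (_ : (ext_run t).1.1.1 s a - Qstar s a = yv (ext_run t) s a + (ext_run t).1.2 s a); last by rewrite /yv; ring.
  apply: le_trans (ler_normD _ _) _; apply: lerD; exact: sup_ge.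
rewrite /Ek Ex_add; apply: lerD; [exact: Y_E | exact: Nn_E].
Qed.

End Model.

Lemma le_div_pos (R : realType) (a b c : R) : 0 <= a -> 0 < b -> b <= c -> a / c <= a / b.
Proof.
move=> a0 b0 bc; apply: ler_wpM2l => //.
have c0 : 0 < c by exact: lt_le_trans bc.
by rewrite lef_pV2 ?posrE.
Qed.

Lemma partA (R : realType) (g al dmv n rh Bv nuv cYv : R) :
  0 < g -> g < 1 -> 0 < al -> al < 1 -> 0 < dmv -> dmv <= 1 -> 1 <= n ->
  rh = 1 - al * dmv * (1 - g) ->
  Bv = (1 - g)^-1 ->
  nuv = 8 * Bv * Num.sqrt al * n / dmv ->
  cYv = al * g * (3 * nuv + 2 * (al * g * nuv / (1 - rh))) ->
  cYv / (1 - rh) + nuv <= 120 * powR al (1/2) * n / (powR dmv (9/2) * powR (1 - g) (11/2)).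
Proof.
move=> g0 g1 a0 a1 d0 d1 n1 erh eB enu ecY.
have g1' : 0 < 1 - g by lra.
have sa0 : 0 < Num.sqrt al by rewrite sqrtr_gt0.
have q0 : 0 < dmv * (1 - g) by apply: mulr_gt0.
have q1 : dmv * (1 - g) <= 1 by apply: mulr_ile1; lra.
set iq := (dmv * (1 - g))^-1.
have iq1 : 1 <= iq by rewrite /iq invf_ge1.
have nu0 : 0 <= nuv.
  rewrite enu eB; apply: divr_ge0; last lra.
  apply: mulr_ge0; last lra.
  apply: mulr_ge0; last lra.
  by apply: mulr_ge0; [lra | rewrite invr_ge0; lra].
have e1 : cYv / (1 - rh) + nuv = nuv * (1 + 3 * g * iq + 2 * g ^+ 2 * iq ^+ 2).
  rewrite ecY erh /iq; field.
  have p0 : 0 < al * dmv * (1 - g) by rewrite -mulrA; apply: mulr_gt0.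
  apply/and3P; split; apply: lt0r_neq0 => //; lra.
have e2 : 1 + 3 * g * iq + 2 * g ^+ 2 * iq ^+ 2 <= 6 * iq ^+ 2.
  have h1 : 1 <= iq ^+ 2 by nra.
  have h2 : g * iq <= iq ^+ 2 by nra.
  have g2 : g ^+ 2 <= 1 by nra.
  have h3 : g ^+ 2 * iq ^+ 2 <= iq ^+ 2 by nra.
  lra.
have e3 : nuv * (6 * iq ^+ 2) = 48 * Num.sqrt al * n / (dmv ^+ 3 * (1 - g) ^+ 3).
  rewrite enu eB /iq; field; apply/andP; split; exact: lt0r_neq0.
rewrite e1; apply: le_trans (ler_wpM2l nu0 e2) _; rewrite e3.
have hP1 : 0 < powR dmv (9/2) * powR (1 - g) (11/2) by apply: mulr_gt0; apply: powR_gt0.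
have hP2 : powR dmv (9/2) * powR (1 - g) (11/2) <= dmv ^+ 3 * (1 - g) ^+ 3.
  apply: ler_pM; try exact: powR_ge0.
    rewrite -(powR_mulrn _ (ltW d0)); apply: ger_powR; [apply/andP; split => //| lra].
  rewrite -(powR_mulrn _ (ltW g1')); apply: ger_powR; [apply/andP; split; lra | lra].
rewrite div1r powR12_sqrt; last exact: ltW.
apply: le_trans (_ : _ <= 120 * Num.sqrt al * n / (dmv ^+ 3 * (1 - g) ^+ 3)) _.
  apply: ler_wpM2r; first by rewrite invr_ge0; apply: mulr_ge0; apply: exprn_ge0; lra.
  apply: ler_wpM2r; [lra | apply: ler_wpM2r; [exact: ltW | lra]].
apply: le_div_pos => //; apply: mulr_ge0; [apply: mulr_ge0; lra | lra].
Qed.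

Lemma partB (R : realType) (g al dmv n rh Bv : R) (k : nat) :
  0 < g -> g < 1 -> 0 < al -> al < 1 -> 0 < dmv -> dmv <= 1 -> 1 <= n ->
  rh = 1 - al * dmv * (1 - g) -> Bv = (1 - g)^-1 ->
  rh ^+ k * (1 + Bv) + 4 * al * g * (k%:R * rh ^+ k.-1) <=
  48 * powR n (3/2) / (1 - g) * (powR rh (-4) * (-8) ^+ 4 / (ln rh) ^+ 4)
    * powR rh (-4 / ln rh) * powR rh (k%:R / 2).
Proof.
move=> g0 g1 a0 a1 d0 d1 n1 erh eB.
have g1' : 0 < 1 - g by lra.
set p := al * dmv * (1 - g).
have erp : rh = 1 - p by rewrite erh.
have p0 : 0 < p by rewrite /p -mulrA; apply: mulr_gt0 => //; apply: mulr_gt0.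
have pd : p <= dmv.
  rewrite /p -mulrA mulrCA; apply: ler_piMr; first exact: ltW.
  by apply: mulr_ile1; lra.
have p1 : p < 1.
  rewrite /p -mulrA; apply: le_lt_trans a1; apply: ler_piMr; first exact: ltW.
  by apply: mulr_ile1; lra.
have r0 : 0 < rh by rewrite erp; lra.
have r1 : rh < 1 by rewrite erp; lra.
have rpos : rh \in Num.pos by rewrite posrE.
set L := - ln rh.
have L0 : 0 < L by rewrite /L oppr_gt0; apply: ln_lt0; apply/andP.
have eL : ln rh = - L by rewrite /L opprK.
have eexp : expR (ln rh) = rh by rewrite lnK.
have eexpL : expR L = rh^-1 by rewrite /L expRN eexp.
have hpL : p <= L.
  have := expR_ge1Dx (ln rh); rewrite eexp eL erp; lra.
have hWL : rh * L <= p.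
  have := expR_ge1Dx L; rewrite eexpL => h.
  have : rh * (1 + L) <= rh * rh^-1 by apply: ler_wpM2l => //; exact: ltW.
  rewrite divff ?lt0r_neq0 //; have := erp; lra.
have hL2 : rh * L ^+ 2 <= 2.
  have := expR_ge1Dxn 1 (ltW L0); rewrite eexpL /= => h.
  have : rh * (1 + L ^+ 2 / 2) <= rh * rh^-1 by apply: ler_wpM2l => //; exact: ltW.
  rewrite divff ?lt0r_neq0 //.
  have -> : rh * (1 + L ^+ 2 / 2) = rh + rh * L ^+ 2 / 2 by field.
  lra.
set h := powR rh (k%:R / 2).
have eh : h = expR (- (k%:R / 2 * L)) by rewrite /h /powR (negbTE (lt0r_neq0 r0)) eL mulrN.
have h0 : 0 <= h by rewrite eh; exact: expR_ge0.
have t0 : 0 <= k%:R / 2 * L by apply: mulr_ge0; [apply: divr_ge0; [exact: ler0n | lra] | exact: ltW].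
have h1 : h <= 1 by rewrite eh expR_le1; lra.
have hsq : h ^+ 2 = rh ^+ k.
  by rewrite eh -expRM_natr -eexp -expRM_natr eL; congr expR; field.
have hkh : k%:R * h * L <= 2.
  set t := k%:R / 2 * L in eh t0.
  have ht : t <= expR t by have := expR_ge1Dx t; lra.
  have -> : k%:R * h * L = 2 * (t * expR (- t)) by rewrite eh /t; field.
  have : t * expR (- t) <= expR t * expR (- t) by apply: ler_wpM2r => //; exact: expR_ge0.
  rewrite expRxMexpNx_1; lra.
set V := k%:R * rh ^+ k.-1.
have V0 : 0 <= V by apply: mulr_ge0; [exact: ler0n | apply: exprn_ge0; exact: ltW].
have hV : rh * V = k%:R * h ^+ 2.
  rewrite hsq /V; case: (k) => [|j] /=; first by rewrite !mul0r mulr0.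
  by rewrite exprS mulrCA.
have hkh2 : 0 <= k%:R * h ^+ 2 by apply: mulr_ge0; [exact: ler0n | exact: sqr_ge0].
have hS : al * V * ((1 - g) * dmv * rh) <= 2 * h.
  have e : al * V * ((1 - g) * dmv * rh) = p * (rh * V) by rewrite /p; ring.
  rewrite e hV.
  have f1 : p * (k%:R * h ^+ 2) <= L * (k%:R * h ^+ 2) by apply: ler_wpM2r.
  have f2 : L * (k%:R * h ^+ 2) = (k%:R * h * L) * h by ring.
  have f3 : (k%:R * h * L) * h <= 2 * h by apply: ler_wpM2r.
  lra.
have Dpos : 0 < (1 - g) * dmv * rh by apply: mulr_gt0 => //; apply: mulr_gt0.
have Dle : (1 - g) * dmv * rh <= 1 - g.
  rewrite -mulrA; apply: ler_piMr; first exact: ltW.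
  by apply: mulr_ile1; lra.
set X := ((1 - g) * dmv * rh)^-1.
have g1n : 1 - g != 0 by exact: lt0r_neq0.
have dn : dmv != 0 by exact: lt0r_neq0.
have rn : rh != 0 by exact: lt0r_neq0.
have Ln : L != 0 by exact: lt0r_neq0.
have X1 : 1 <= X by rewrite /X invf_ge1 //; lra.
have BX : Bv <= X by rewrite eB /X lef_pV2 ?posrE.
have aVX : al * V <= 2 * h * X.
  have -> : al * V = (al * V * ((1 - g) * dmv * rh)) * X by rewrite /X; field; rewrite ?g1n ?dn ?rn ?Ln.
  apply: ler_wpM2r; [rewrite /X invr_ge0; exact: ltW | exact: hS].
have aV0 : 0 <= al * V by apply: mulr_ge0 => //; exact: ltW.
have LHSb : rh ^+ k * (1 + Bv) + 4 * al * g * V <= 10 * h * X.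
  rewrite -hsq.
  have q1 : 0 <= (h - h ^+ 2) * (1 + Bv).
    apply: mulr_ge0; first nra.
    have : 0 <= Bv by rewrite eB invr_ge0; lra.
    lra.
  have q2 : 0 <= h * (2 * X - 1 - Bv) by apply: mulr_ge0 => //; lra.
  have q3 : 4 * al * g * V <= 4 * (al * V).
    have : 0 <= al * V * (1 - g) by apply: mulr_ge0 => //; lra.
    nra.
  nra.
have ePinv : powR rh (-4) = (rh ^+ 4)^-1 by rewrite powR_invn //; exact: ltW.
have eE : powR rh (-4 / ln rh) = expR (-4).
  rewrite {1}/powR (negbTE (lt0r_neq0 r0)); congr expR; rewrite eL; field.
  exact: lt0r_neq0.
have E4 : 256^-1 <= expR (-4 : R).
  have e : expR (-4 : R) = expR (- 2^-1) ^+ 8 by rewrite -expRM_natr; congr expR; field.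
  have e1 : 2^-1 <= expR (- 2^-1 : R) by have := expR_ge1Dx (- 2^-1 : R); lra.
  rewrite e; apply: le_trans (_ : (2^-1) ^+ 8 <= _).
    have e2 : (2 : R) ^+ 8 = 256 by ring.
    by rewrite exprVn e2.
  apply: lerXn2r; [rewrite nnegrE; lra | rewrite nnegrE; exact: expR_ge0 | exact: e1].
have Pn1 : 1 <= powR n (3/2).
  apply: le_trans (_ : powR n 0 <= _); first by rewrite powRr0.
  by apply: ler_powR => //; apply: divr_ge0.
have e8 : (-8 : R) ^+ 4 = 4096 by ring.
have eL4 : (ln rh) ^+ 4 = L ^+ 4 by rewrite eL; ring.
rewrite ePinv eE e8 eL4 -/h.
set C := 48 * 4096 * powR n (3/2) * expR (-4).
set D4 := (1 - g) * rh ^+ 4 * L ^+ 4.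
have D40 : 0 < D4 by apply: mulr_gt0; [apply: mulr_gt0 => //; exact: exprn_gt0 | exact: exprn_gt0].
have eR : 48 * powR n (3/2) / (1 - g) * ((rh ^+ 4)^-1 * 4096 / L ^+ 4) * expR (-4) * h = h * C / D4.
  by rewrite /C /D4; field; rewrite ?g1n ?dn ?rn ?Ln.
rewrite eR.
have C768 : 768 <= C.
  have f1 : 0 <= (powR n (3/2) - 1) * expR (-4 : R) by apply: mulr_ge0; [lra | exact: expR_ge0].
  have f2 : C = (48 * 4096) * (powR n (3/2) * expR (-4)) by rewrite /C; ring.
  rewrite f2.
  have f3 : 256^-1 <= powR n (3/2) * expR (-4 : R) by lra.
  have f4 : (48 * 4096 : R) * 256^-1 = 768 by field.
  have f5 := ler_wpM2l (_ : 0 <= 48 * 4096 :> R) f3.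
  lra.
have D4le : D4 <= 2 * ((1 - g) * dmv * rh).
  have f1 : (rh * L) ^+ 2 <= dmv.
    have : rh * L <= dmv by lra.
    have : 0 <= rh * L by apply: mulr_ge0; apply: ltW.
    nra.
  have e : D4 = (1 - g) * ((rh * L) ^+ 2 * (rh * L ^+ 2) * rh) by rewrite /D4; ring.
  rewrite e.
  have f2 : (rh * L) ^+ 2 * (rh * L ^+ 2) <= dmv * 2.
    apply: ler_pM => //; [exact: sqr_ge0 | apply: mulr_ge0; [exact: ltW | exact: sqr_ge0]].
  have f3 : (rh * L) ^+ 2 * (rh * L ^+ 2) * rh <= dmv * 2 * rh by apply: ler_wpM2r => //; exact: ltW.
  have f4 := ler_wpM2l (ltW g1') f3.
  lra.
have XD : X * D4 <= 2.
  have : X * D4 <= X * (2 * ((1 - g) * dmv * rh)) by apply: ler_wpM2l => //; lra.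
  have -> : X * (2 * ((1 - g) * dmv * rh)) = 2 by rewrite /X; field; rewrite ?g1n ?dn ?rn ?Ln.
  done.
apply: le_trans LHSb _.
have D4n : D4 != 0 by exact: lt0r_neq0.
have -> : 10 * h * X = h * (10 * X * D4) / D4 by field.
apply: ler_wpM2r; first by rewrite invr_ge0; exact: ltW.
apply: ler_wpM2l => //; lra.
Qed.

Lemma final_arith (R : realType) (g al dmv n : R) (k : nat) :
  0 < g -> g < 1 -> 0 < al -> al < 1 -> 0 < dmv -> dmv <= 1 -> 1 <= n ->
  (1 - al * dmv * (1 - g)) ^+ k * (1 + (1 - g)^-1)
  + al * g * (3 * (8 * (1 - g)^-1 * Num.sqrt al * n / dmv)
      + 2 * (al * g * (8 * (1 - g)^-1 * Num.sqrt al * n / dmv) / (1 - (1 - al * dmv * (1 - g)))))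
    / (1 - (1 - al * dmv * (1 - g)))
  + (4 * al * g) * (k%:R * (1 - al * dmv * (1 - g)) ^+ k.-1)
  + 8 * (1 - g)^-1 * Num.sqrt al * n / dmv
  <= 120 * powR al (1/2) * n / (powR dmv (9/2) * powR (1 - g) (11/2))
    + 48 * powR n (3/2) / (1 - g)
      * (powR (1 - al * dmv * (1 - g)) (-4) * (-8) ^+ 4 / (ln (1 - al * dmv * (1 - g))) ^+ 4)
      * powR (1 - al * dmv * (1 - g)) (-4 / ln (1 - al * dmv * (1 - g)))
      * powR (1 - al * dmv * (1 - g)) (k%:R / 2).
Proof.
move=> g0 g1 a0 a1 d0 d1 n1.
have hA := @partA R g al dmv n _ _ _ _ g0 g1 a0 a1 d0 d1 n1 erefl erefl erefl erefl.
have hB := @partB R g al dmv n _ _ k g0 g1 a0 a1 d0 d1 n1 erefl erefl.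
lra.
Qed.

Lemma swap_step (R : realType) (S A : finType) sel (r : S -> A -> S -> R) gamma alpha
  (QQ : (S -> A -> R) * (S -> A -> R)) x :
  sdq_step sel r gamma alpha (QQ.2, QQ.1) x =
  ((sdq_step sel r gamma alpha QQ x).2, (sdq_step sel r gamma alpha QQ x).1).
Proof. by case: QQ => QA QB; case: x => [[s0 a0] s1]. Qed.

Lemma swap_fold (R : realType) (S A : finType) sel (r : S -> A -> S -> R) gamma alpha t :
  forall QQ : (S -> A -> R) * (S -> A -> R),
  foldl (sdq_step sel r gamma alpha) (QQ.2, QQ.1) t =
  ((foldl (sdq_step sel r gamma alpha) QQ t).2, (foldl (sdq_step sel r gamma alpha) QQ t).1).
Proof.
elim: t => [|x t IH] QQ; first by case: QQ.
have e1 : foldl (sdq_step sel r gamma alpha) (QQ.2, QQ.1) (x :: t) =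
  foldl (sdq_step sel r gamma alpha) (sdq_step sel r gamma alpha (QQ.2, QQ.1) x) t := erefl.
have e2 : foldl (sdq_step sel r gamma alpha) QQ (x :: t) =
  foldl (sdq_step sel r gamma alpha) (sdq_step sel r gamma alpha QQ x) t := erefl.
by rewrite e1 e2 swap_step IH.
Qed.

Lemma swap_run (R : realType) (S A : finType) sel (r : S -> A -> S -> R) gamma alpha
  (QA QB : S -> A -> R) t :
  sdq_run sel r gamma alpha (QB, QA) t =
  ((sdq_run sel r gamma alpha (QA, QB) t).2, (sdq_run sel r gamma alpha (QA, QB) t).1).
Proof. exact: (@swap_fold _ _ _ sel r gamma alpha t (QA, QB)). Qed.


Theorem corollary1 (R : realType) (S A : finType)
  (P : S -> A -> S -> R) (r : S -> A -> S -> R) (gamma alpha : R)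
  (p : S -> R) (beta : S -> A -> R) (d : S -> A -> R)
  (Qstar : S -> A -> R) (sel : (A -> R) -> A) (Q0A Q0B : S -> A -> R) :
  is_kernel P ->
  (forall s a s', `|r s a s'| <= 1) ->
  0 < gamma < 1 ->
  0 < alpha < 1 ->
  is_distr p -> is_policy beta ->
  stationary P beta p -> ergodic_chain P beta ->
  (forall s a, d s a = p s * beta s a) ->
  (forall s a, 0 < d s a) ->
  bellman_optimal P r gamma Qstar ->
  (forall (F : A -> R) a, F a <= F (sel F)) ->
  supnorm Q0A <= 1 -> supnorm Q0B <= 1 ->
  let dm := dmin d in
  let rho := 1 - alpha * dm * (1 - gamma) in
  let nSA : R := #|{: S * A}|%:R in
  forall k : nat,
  let bound :=
    120 * powR alpha (1/2) * nSA / (powR dm (9/2) * powR (1 - gamma) (11/2))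
    + 48 * powR nSA (3/2) / (1 - gamma)
      * (powR rho (-4) * (-8) ^+ 4 / (ln rho) ^+ 4)
      * powR rho (-4 / ln rho) * powR rho (k%:R / 2) in
  sdq_expect d P sel r gamma alpha (Q0A, Q0B) k
    (fun QQ => supnorm (fun s a => QQ.1 s a - Qstar s a)) <= bound /\
  sdq_expect d P sel r gamma alpha (Q0A, Q0B) k
    (fun QQ => supnorm (fun s a => QQ.2 s a - Qstar s a)) <= bound.
Proof.
move=> hPk hr /andP[hg0 hg1] /andP[ha0 ha1] hp hbeta _ _ hdp hd hQ hsel hA0 hB0 dm0 rho0 nSA0 k bound0.
have hdsum : \sum_(sa : S * A) d sa.1 sa.2 = 1.
  have -> : \sum_(sa : S * A) d sa.1 sa.2 = \sum_s \sum_a d s a.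
    by rewrite pair_big /=; apply: eq_bigr => -[].
  have [_ hp1] := hp; rewrite -hp1; apply: eq_bigr => s _.
  have [_ hb1] := hbeta s.
  by under eq_bigr do rewrite hdp; rewrite -mulr_sumr hb1 mulr1.
have hQ0A : forall s a, `|Q0A s a| <= 1 := fun s a => le_trans (sup_ge Q0A s a) hA0.
have hQ0B : forall s a, `|Q0B s a| <= 1 := fun s a => le_trans (sup_ge Q0B s a) hB0.
have hdm0 : 0 < dmin d := @dm_gt0 R S A d hd.
have hdm1 : dmin d <= 1 := @dm_le1 R S A d hd hdsum.
have hn1 : 1 <= (#|{: S * A}|%:R : R) := @nSA_ge1 R S A d hdsum.
have hfin := @final_arith R gamma alpha (dmin d) (#|{: S * A}|%:R) k hg0 hg1 ha0 ha1 hdm0 hdm1 hn1.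
split.
  apply: le_trans (@model_bound R S A P r gamma alpha d Qstar sel Q0A Q0B hPk hr hg0 hg1 ha0 ha1 hd hdsum hQ hsel hQ0A hQ0B k) _.
  exact: hfin.
have -> : sdq_expect d P sel r gamma alpha (Q0A, Q0B) k (fun QQ => supnorm (fun s a => QQ.2 s a - Qstar s a))
  = sdq_expect d P sel r gamma alpha (Q0B, Q0A) k (fun QQ => supnorm (fun s a => QQ.1 s a - Qstar s a)).
  by rewrite /sdq_expect; apply: eq_bigr => t _; rewrite swap_run.
apply: le_trans (@model_bound R S A P r gamma alpha d Qstar sel Q0B Q0A hPk hr hg0 hg1 ha0 ha1 hd hdsum hQ hsel hQ0B hQ0A k) _.
exact: hfin.
Qed.
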